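(* Let $\mathbf H=\mathbf g\mathbf h^T$ with $\mathbf g\in\mathbb C^{M_R}$, $\mathbf h\in\mathbb C^{M_T}$, let $\mathbf\Theta\in\mathbb C^{M_R\times M_T}$ have full rank, and set $\hat{\mathbf H}=\mathbf H\circ\mathbf\Theta$. If $M_R\le M_T$, there exist numbers $\varepsilon_1,\dots,\varepsilon_{M_R}$ with $\min_i|[\mathbf h]_i|^2\le\varepsilon_i\le\max_i|[\mathbf h]_i|^2$ such that $$\det(\hat{\mathbf H}\hat{\mathbf H}^H)=\Big(\prod_{i=1}^{M_R}|[\mathbf g]_i|^2\varepsilon_i\Big)\det(\mathbf\Theta\mathbf\Theta^H).$$ If $M_R\ge M_T$, there exist numbers $\nu_1,\dots,\nu_{M_T}$ with $\min_i|[\mathbf g]_i|^2\le\nu_i\le\max_i|[\mathbf g]_i|^2$ such that $$\det(\hat{\mathbf H}^H\hat{\mathbf H})=\Big(\prod_{i=1}^{M_T}|[\mathbf h]_i|^2\nu_i\Big)\det(\mathbf\Theta^H\mathbf\Theta).$$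
   Context: $\circ$ denotes the Hadamard (entrywise) product; $[\mathbf x]_i$ is the $i$th entry of $\mathbf x$. *)

(* Defs.v *)
(* Complex numbers: an arbitrary numClosedFieldType C
   (algebraically closed field with conjugation and norm, e.g. algC; C-like). *)
From HB Require Import structures.
From mathcomp Require Import all_boot all_order all_algebra.
Set Implicit Arguments. Unset Strict Implicit. Unset Printing Implicit Defensive.
Import Order.TTheory GRing.Theory Num.Theory.
Local Open Scope ring_scope.

Definition ctrmx (C : numClosedFieldType) (m n : nat) (A : 'M[C]_(m, n)) : 'M[C]_(n, m) :=
  map_mx Num.conj (A^T).

Definition hadamard (C : numClosedFieldType) (m n : nat) (A B : 'M[C]_(m, n)) : 'M[C]_(m, n) :=
  \matrix_(i, j) (A i j * B i j).

(* min_i x_i <= e <= max_i x_i, for a finite family of (real) values x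
   (over a total order: some x_i is <= e and some x_j is >= e). *)
Definition in_min_max (C : numClosedFieldType) (n : nat) (x : 'I_n -> C) (e : C) : Prop :=
  (exists i, x i <= e) /\ (exists j, e <= x j).

(* Main.v *)
Require Import Defs.
From HB Require Import structures.
From mathcomp Require Import all_boot all_order all_algebra all_fingroup.
Import Order.TTheory GRing.Theory Num.Theory.
Local Open Scope ring_scope.
Set Implicit Arguments. Unset Strict Implicit. Unset Printing Implicit Defensive.

Lemma detM_expand (R : comNzRingType) n m (A : 'M[R]_(n, m)) (B : 'M[R]_(m, n)) :
  \det (A *m B) = \sum_(f : {ffun 'I_n -> 'I_m})
     (\prod_i A i (f i)) * \det (\matrix_(i, j) B (f i) j).
Proof.
rewrite /determinant.
under eq_bigr => s _.
  rewrite (eq_bigr (fun i => \sum_(k < m) A i k * B k ((s : 'S_n) i))); last by move=> i _; rewrite mxE.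
  rewrite bigA_distr_bigA big_distrr /=.
  over.
rewrite exchange_big /=; apply: eq_bigr => f _.
rewrite big_distrr /=; apply: eq_bigr => s _.
rewrite big_split /= mulrCA; congr (_ * (_ * _)).
by apply: eq_bigr => i _; rewrite mxE.
Qed.

Section Core.
Variable C : numClosedFieldType.

Definition Pt n m (X : 'M[C]_(n, m)) (f : {ffun 'I_n -> 'I_m}) :=
  (\prod_i X i (f i)) * \det (\matrix_(i, j) (ctrmx X) (f i) j).
Definition Yd n m (X : 'M[C]_(n, m)) (d : 'I_m -> C) := \matrix_(i, k) (X i k * d k).

Lemma expand_d n m (X : 'M[C]_(n, m)) d :
  \det (Yd X d *m ctrmx X) = \sum_(f : {ffun 'I_n -> 'I_m}) (\prod_i d (f i)) * Pt X f.
Proof.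
rewrite detM_expand; apply: eq_bigr => f _.
rewrite /Pt mulrA; congr (_ * _).
rewrite -big_split /=; apply: eq_bigr => i _; by rewrite mxE mulrC.
Qed.

Lemma Pt_noninj n m (X : 'M[C]_(n, m)) (f : {ffun 'I_n -> 'I_m}) : ~~ injectiveb f -> Pt X f = 0.
Proof.
move/injectivePn => [i1 [i2 ne e]].
rewrite /Pt (determinant_alternate ne) ?mulr0 // => j.
by rewrite !mxE e.
Qed.

Lemma prod_ind (I : finType) (b : I -> bool) :
  \prod_i ((b i)%:R : C) = ([forall i, b i])%:R.
Proof.
case: forallP => [H|/forallP/forallPn [i Hi]].
  by apply: big1 => i _; rewrite H.
by rewrite (bigD1 i) //= (negPf Hi) mul0r.
Qed.

Lemma det_ZZ n (Z : 'M[C]_n) : 0 <= \det (Z *m ctrmx Z).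
Proof.
rewrite det_mulmx /ctrmx det_map_mx det_tr -normCK.
by apply: exprn_ge0.
Qed.

Definition Vt n m (X : 'M[C]_(n, m)) (S : {set 'I_m}) :=
  \sum_(f : {ffun 'I_n -> 'I_m} | [forall i, f i \in S]) Pt X f.

Lemma V_nonneg n m (X : 'M[C]_(n, m)) (S : {set 'I_m}) :
  #|S| = n -> 0 <= Vt X S.
Proof.
move=> HS.
have -> : Vt X S = \det (Yd X (fun k => ((k \in S)%:R : C)) *m ctrmx X).
  rewrite expand_d /Vt big_mkcond /=; apply: eq_bigr => f _.
  by rewrite prod_ind; case: forallP => _; rewrite ?mul1r ?mul0r.
subst n.
pose Z : 'M[C]_#|S| := \matrix_(i, k) X i (enum_val (A := S) k).
have -> : Yd X (fun k => ((k \in S)%:R : C)) *m ctrmx X = Z *m ctrmx Z.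
  apply/matrixP => i j; rewrite !mxE.
  rewrite (eq_bigr (fun k => if k \in S then X i k * Num.conj (X j k) else 0)); last first.
    by move=> k _; rewrite !mxE; case: (k \in S); rewrite ?mulr1 ?mulr0 ?mul0r.
  rewrite -big_mkcond /= (big_enum_val (A := mem S)) /=.
  by apply: eq_bigr => k _; rewrite !mxE.
exact: det_ZZ.
Qed.

End Core.

Section Core2.
Variable C : numClosedFieldType.

Lemma sum_identity n m (X : 'M[C]_(n, m)) (d : 'I_m -> C) :
  \sum_(f : {ffun 'I_n -> 'I_m}) (\prod_i d (f i)) * Pt X f =
  \sum_(S : {set 'I_m} | #|S| == n) (\prod_(j in S) d j) * Vt X S.
Proof.
rewrite /Vt.
under [RHS]eq_bigr => S _ do rewrite big_distrr.
rewrite /= (exchange_big_dep predT) //=.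
apply: eq_bigr => f _.
case: (boolP (injectiveb f)) => [/injectiveP inj|ninj]; last first.
  rewrite (Pt_noninj X ninj) mulr0; symmetry; apply: big1 => S _; by rewrite mulr0.
have cim : #|[set f i | i : 'I_n]| = n.
  by rewrite card_imset // card_ord.
rewrite (eq_bigl (fun S => S == [set f i | i : 'I_n])) => [|S]; last first.
  rewrite /= [S == _]eq_sym eqEcard cim.
  have -> : ([set f i | i : 'I_n] \subset S) = [forall i, f i \in S].
    apply/subsetP/forallP => [H i|H _ /imsetP [i _ ->] //].
    by apply: H; apply/imsetP; exists i.
  case: forallP => H /=; last by rewrite andbF.
  rewrite andbT; apply/eqP/idP => [<-//|le].
  apply/eqP; rewrite eqn_leq le -cim; apply: subset_leq_card.
  by apply/subsetP => _ /imsetP [i _ ->].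
rewrite big_pred1_eq big_imset /=; last by move=> x y _ _; apply: inj.
by congr (_ * _); apply: eq_bigl => i; rewrite inE.
Qed.

End Core2.

Section Core3.
Variable C : numClosedFieldType.

Lemma core_bounds n m (X : 'M[C]_(n, m)) (d : 'I_m -> C) lo hi :
  0 <= lo -> (forall j, lo <= d j <= hi) ->
  0 <= \det (X *m ctrmx X) /\
  lo ^+ n * \det (X *m ctrmx X) <= \det (Yd X d *m ctrmx X) /\
  \det (Yd X d *m ctrmx X) <= hi ^+ n * \det (X *m ctrmx X).
Proof.
move=> lo0 Hd.
have eX : X = Yd X (fun _ => 1) by apply/matrixP => i j; rewrite mxE mulr1.
have D0 : \det (X *m ctrmx X) = \sum_(S : {set 'I_m} | #|S| == n) Vt X S.
  rewrite {1}eX expand_d (sum_identity X (fun _ => 1)); apply: eq_bigr => S _.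
  by rewrite big1 ?mul1r.
have D1 := sum_identity X d; rewrite -expand_d in D1.
have Vp : forall S : {set 'I_m}, #|S| == n -> 0 <= Vt X S.
  by move=> S /eqP HS; apply: V_nonneg.
split; first by rewrite D0; apply: sumr_ge0.
rewrite D0 D1 !mulr_sumr; split; apply: ler_sum => S HS;
  (apply: ler_wpM2r; first exact: Vp); rewrite -(eqP HS) -prodr_const;
  apply: ler_prod => j _; case/andP: (Hd j) => h1 h2.
  by rewrite lo0 h1.
by rewrite h2 (le_trans lo0 h1).
Qed.
End Core3.

Section Gen.
Variable C : numClosedFieldType.

Lemma prod_const_ord k (c : C) : \prod_(i < k) c = c ^+ k.
Proof. by rewrite big_const_ord; elim: k => //= k ->; rewrite exprS. Qed.

Lemma ex_min (I : finType) (x : I -> C) (i0 : I) :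
  (forall i, x i \is Num.real) -> exists i, forall j, x i <= x j.
Proof.
move=> Hr.
suff H : forall s : seq I, exists i, forall j, j \in s -> x i <= x j.
  by have [i Hi] := H (enum I); exists i => j; apply: Hi; rewrite mem_enum.
elim=> [|a s [i Hi]]; first by exists i0.
have := real_leVge (Hr a) (Hr i); case/orP => h.
  exists a => j; rewrite inE => /orP [/eqP -> // | js].
  exact: le_trans h (Hi j js).
exists i => j; rewrite inE => /orP [/eqP -> // | js]; exact: Hi.
Qed.

Lemma ex_max (I : finType) (x : I -> C) (i0 : I) :
  (forall i, x i \is Num.real) -> exists i, forall j, x j <= x i.
Proof.
move=> Hr; have [|i Hi] := @ex_min I (fun i => - x i) i0.
  by move=> i; rewrite realN.
by exists i => j; rewrite -lerN2.
Qed.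

Lemma gen n m (X : 'M[C]_(n, m)) (a : 'I_n -> C) (b : 'I_m -> C) : (n <= m)%N ->
  exists eps : 'I_n -> C,
    (forall k, in_min_max (fun i => `|b i| ^+ 2) (eps k)) /\
    \det (diag_mx (\row_i a i) *m (Yd X (fun j => `|b j| ^+ 2) *m ctrmx X)
          *m diag_mx (\row_i Num.conj (a i)))
    = \prod_i (`|a i| ^+ 2 * eps i) * \det (X *m ctrmx X).
Proof.
case: n X a => [|n] X a Hnm.
  exists (fun _ => 0); split; first by case.
  by rewrite !det_mx00 big_ord0 mul1r.
case: m X b Hnm => // m X b _.
set d := fun j => `|b j| ^+ 2.
have dr : forall j, d j \is Num.real by move=> j; apply: ger0_real; apply: exprn_ge0.
have [imin Hmin] := ex_min ord0 dr.
have [imax Hmax] := ex_max ord0 dr.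
set lo := d imin; set hi := d imax.
have lo0 : 0 <= lo by apply: exprn_ge0.
have Hd : forall j, lo <= d j <= hi by move=> j; rewrite Hmin Hmax.
rewrite !det_mulmx !det_diag.
set D0 := \det (X *m ctrmx X).
set D1 := \det (Yd X d *m ctrmx X).
have [D0ge [L U]] := core_bounds X lo0 Hd.
rewrite -/D0 -/D1 in D0ge L U.
have Pa : \prod_i (\row_i a i) 0 i * D1 * \prod_i (\row_i Num.conj (a i)) 0 i
   = \prod_i `|a i| ^+ 2 * D1.
  rewrite mulrAC; congr (_ * _); rewrite -big_split /=.
  by apply: eq_bigr => i _; rewrite !mxE normCK.
rewrite Pa.
have hilo : lo <= hi by case/andP: (Hd imin) => /le_trans; apply.
have hi0 : 0 <= hi := le_trans lo0 hilo.
case: (D0 =P 0) => HD0.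
  have D10 : D1 = 0.
    by apply/eqP; rewrite eq_le; move: L U; rewrite HD0 !mulr0 => -> ->.
  exists (fun _ => lo); split.
    by move=> k; split; [exists imin | exists imax].
  by rewrite D10 HD0 !mulr0.
have D0p : 0 < D0 by rewrite lt_def D0ge andbT; apply/eqP.
set r := D1 / D0.
have r0 : 0 <= r by apply: divr_ge0 => //; apply: le_trans L; apply: mulr_ge0 => //; apply: exprn_ge0.
have rlo : lo ^+ n.+1 <= r by rewrite ler_pdivlMr.
have rhi : r <= hi ^+ n.+1 by rewrite ler_pdivrMr.
exists (fun _ => n.+1.-root r); split.
  move=> k; split; [exists imin | exists imax].
    rewrite -[X in X <= _](exprCK (ltn0Sn n) lo0) ler_rootC // nnegrE //; exact: exprn_ge0.
  rewrite -[X in _ <= X](exprCK (ltn0Sn n) hi0) ler_rootC // nnegrE //; exact: exprn_ge0.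
rewrite [in RHS]big_split /= prod_const_ord rootCK // -mulrA; congr (_ * _).
by rewrite /r divfK //; apply/eqP.
Qed.
End Gen.

Unset Implicit Arguments.

Lemma ac1 (C : comNzRingType) (x1 x2 x3 y1 y2 y3 : C) :
  x1 * x2 * x3 * (y1 * y2 * y3) = x1 * (x3 * (x2 * y2) * y3) * y1.
Proof.
rewrite -!mulrA; congr (_ * _); rewrite mulrCA; congr (_ * (_ * _)).
by rewrite mulrC -mulrA.
Qed.
Lemma ac2 (C : comNzRingType) (x1 x2 x3 y1 y2 y3 : C) :
  y1 * x2 * x3 * (x1 * y2 * y3) = x2 * (x3 * (x1 * y1) * y3) * y2.
Proof.
rewrite -!mulrA [y1 * _]mulrC -!mulrA; congr (_ * (_ * _)).
by rewrite (mulrCA y2) (mulrCA y1) (mulrC y2 y1).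
Qed.

Lemma ctrmxK (C : numClosedFieldType) m n (A : 'M[C]_(m, n)) : ctrmx (ctrmx A) = A.
Proof. by apply/matrixP => i j; rewrite !mxE conjCK. Qed.

Theorem theorem2 (C : numClosedFieldType) (MR MT : nat)
  (g : 'cV[C]_MR) (h : 'cV[C]_MT) (Theta : 'M[C]_(MR, MT))
  (hTheta : \rank Theta = minn MR MT) :
  let H := g *m h^T in
  let Hh := hadamard H Theta in
  ((MR <= MT)%N ->
    exists eps : 'I_MR -> C,
      (forall k, in_min_max (fun i : 'I_MT => `|h i 0| ^+ 2) (eps k)) /\
      \det (Hh *m ctrmx Hh) =
        (\prod_(i < MR) (`|g i 0| ^+ 2 * eps i)) * \det (Theta *m ctrmx Theta)) /\
  ((MT <= MR)%N ->
    exists nu : 'I_MT -> C,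
      (forall k, in_min_max (fun i : 'I_MR => `|g i 0| ^+ 2) (nu k)) /\
      \det (ctrmx Hh *m Hh) =
        (\prod_(i < MT) (`|h i 0| ^+ 2 * nu i)) * \det (ctrmx Theta *m Theta)).
Proof.
move=> H Hh.
have HhE : forall i j, Hh i j = g i 0 * h j 0 * Theta i j.
  by move=> i j; rewrite /Hh /hadamard /H !mxE big_ord1 !mxE.
split=> Hle.
  have [eps [He Hdet]] := gen Theta (fun i => g i 0) (fun j => h j 0) Hle.
  exists eps; split => //; rewrite -Hdet; congr (\det _).
  apply/matrixP => i i'; rewrite mul_mx_diag mul_diag_mx !mxE mulr_sumr mulr_suml.
  apply: eq_bigr => j _; rewrite /ctrmx /Yd !mxE !big_ord1 !mxE !rmorphM normCK.
  exact: ac1.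
have [nu [He Hdet]] := gen (ctrmx Theta) (fun j => Num.conj (h j 0)) (fun i => g i 0) Hle.
exists nu; split => //.
rewrite (eq_bigr (fun i => `|Num.conj (h i 0)| ^+ 2 * nu i)); last by move=> i _; rewrite norm_conjC.
rewrite ctrmxK in Hdet; rewrite -Hdet; congr (\det _).
apply/matrixP => j j'; rewrite mul_mx_diag mul_diag_mx !mxE mulr_sumr mulr_suml.
apply: eq_bigr => i _; rewrite /ctrmx /Yd !mxE !big_ord1 !mxE !rmorphM normCK !conjCK.
exact: ac2.
Qed.
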